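(* Let $\beta\in(0,1)$ and $1\le t\le n$. With $q_{n,s}:=\beta^{n-s}\frac{1-\beta}{1-\beta^n}$ and $\lambda_{n,t}:=\sum_{i=t}^n\sum_{j=1}^{t-1}q_{n,i}q_{n,j}(i-j)$, it holds that $$\lambda_{n,t}\le\frac{(n-t+1)\beta^{n-t+1}}{1-\beta^n}.$$
   Context: An empty sum equals $0$. *)

(* Defs.v *)
From mathcomp Require Import all_boot all_order all_algebra.
Set Implicit Arguments. Unset Strict Implicit. Unset Printing Implicit Defensive.
Import Order.TTheory GRing.Theory Num.Theory.
Local Open Scope ring_scope.

(* q_{n,s} := beta^(n-s) (1-beta)/(1-beta^n), for 1 <= s <= n (nat subtraction n - s is exact there) *)
Definition q {R : realFieldType} (beta : R) (n s : nat) : R :=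
  beta ^+ (n - s) * (1 - beta) / (1 - beta ^+ n).

Definition lambda {R : realFieldType} (beta : R) (n t : nat) : R :=
  \sum_(t <= i < n.+1) \sum_(1 <= j < t)
     q beta n i * q beta n j * (i%:R - j%:R).

(* Main.v *)
Require Import Defs.
From mathcomp Require Import all_boot all_order all_algebra.
From mathcomp Require Import zify ring lra.
Import Order.TTheory GRing.Theory Num.Theory.
Local Open Scope ring_scope.

Lemma sum_rev0 (R : nmodType) (lo hi : nat) (F : nat -> R) : (lo <= hi)%N ->
  \sum_(lo <= i < hi) F i = \sum_(i < hi - lo) F (hi.-1 - i)%N.
Proof.
move=> h; rewrite big_nat_rev.
have -> : \sum_(lo <= i < hi) F (lo + hi - i.+1)%N = \sum_(0 + lo <= i < hi) F (lo + hi - i.+1)%N by rewrite add0n.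
rewrite big_addn big_mkord.
by apply: eq_bigr => i _; congr F; have := ltn_ord i; lia.
Qed.

Lemma sum_rev (R : nmodType) (lo hi K : nat) (F : nat -> R) : (lo <= hi)%N ->
  (hi - lo = K)%N -> \sum_(lo <= i < hi) F i = \sum_(i < K) F (hi.-1 - i)%N.
Proof. by move=> h <-; apply: sum_rev0. Qed.

Section S.
Variable R : realFieldType.
Variable b : R.

Lemma G_id r : (1 - b) * \sum_(k < r) b ^+ k = 1 - b ^+ r.
Proof.
elim: r => [|r IH]; first by rewrite big_ord0 expr0; ring.
by rewrite big_ord_recr /= mulrDr IH exprS; ring.
Qed.

Lemma H_id r : (1 - b) * \sum_(k < r) (k%:R * b ^+ k) =
  \sum_(k < r) b ^+ k - 1 - (r%:R - 1) * b ^+ r.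
Proof.
elim: r => [|r IH]; first by rewrite !big_ord0 expr0; ring.
by rewrite big_ord_recr /= mulrDr IH big_ord_recr /= exprS -addn1 natrD; ring.
Qed.

Lemma S_id m r :
  \sum_(a < m) \sum_(k < r) (b ^+ a * b ^+ (m + k) * (m%:R + k%:R - a%:R)) =
  b ^+ m * ((\sum_(k < r) b ^+ k) * (m%:R * \sum_(a < m) b ^+ a - \sum_(a < m) (a%:R * b ^+ a))
            + (\sum_(a < m) b ^+ a) * \sum_(k < r) (k%:R * b ^+ k)).
Proof.
have E : forall a : 'I_m, \sum_(k < r) (b ^+ a * b ^+ (m + k) * (m%:R + k%:R - a%:R)) =
   b ^+ m * ((m%:R - a%:R) * b ^+ a * \sum_(k < r) b ^+ k + b ^+ a * \sum_(k < r) (k%:R * b ^+ k)).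
  move=> a; rewrite !mulr_sumr -big_split mulr_sumr; apply: eq_bigr => k _.
  rewrite /= exprD; ring.
rewrite (eq_bigr _ (fun a _ => E a)) -mulr_sumr; congr (_ * _).
rewrite big_split /= -!mulr_suml.
have -> : \sum_(a < m) (m%:R - a%:R) * b ^+ a = m%:R * \sum_(a < m) b ^+ a - \sum_(a < m) (a%:R * b ^+ a).
  by rewrite mulr_sumr -sumrB; apply: eq_bigr => a _; ring.
ring.
Qed.

End S.

Lemma key (R : realFieldType) (b : R) (m r : nat) : 0 < b -> b < 1 -> (1 <= r)%N ->
  (1 - b) ^+ 2 * ((\sum_(k < r) b ^+ k) * (m%:R * (\sum_(a < m) b ^+ a) - \sum_(a < m) (a%:R * b ^+ a))
     + (\sum_(a < m) b ^+ a) * \sum_(k < r) (k%:R * b ^+ k)) <= m%:R * (1 - b ^+ m * b ^+ r).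
Proof.
move=> b0 b1 r1.
set Gm := \sum_(a < m) b ^+ a; set Gr := \sum_(k < r) b ^+ k.
set Hm := \sum_(a < m) (a%:R * b ^+ a); set Hr := \sum_(k < r) (k%:R * b ^+ k).
have eG1 := G_id _ b m; have eG2 := G_id _ b r; have eH1 := H_id _ b m; have eH2 := H_id _ b r.
rewrite -/Gm -/Hm in eG1 eH1; rewrite -/Gr -/Hr in eG2 eH2.
set p := b ^+ m in eG1 eH1 *; set s := b ^+ r in eG2 eH2 *.
have X : (1 - b) ^+ 2 * (Gr * (m%:R * Gm - Hm) + Gm * Hr) =
   ((1 - b) * Gr) * (m%:R * ((1 - b) * Gm) - (1 - b) * Hm) + ((1 - b) * Gm) * ((1 - b) * Hr) by ring.
rewrite X eG1 eG2 eH1 eH2.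
have e2 : (1 - p) * (Gr - 1) = Gm * ((1 - b) * Gr - (1 - b)) by rewrite -eG1; ring.
rewrite eG2 in e2.
have e3 : Gm * b = Gm - (1 - p) by rewrite -eG1; ring.
have p0 : 0 <= p by rewrite exprn_ge0 // ltW.
have p1 : p <= 1 by rewrite exprn_ile1 // ltW.
have s0 : 0 <= s by rewrite exprn_ge0 // ltW.
have r0 : 0 <= r%:R - 1 :> R by rewrite subr_ge0 ler1n.
have m0 : 0 <= m%:R :> R by [].
have h1 : 0 <= (1 - p) * (r%:R - 1) * s by rewrite mulr_ge0 // mulr_ge0 // subr_ge0.
have h2 : 0 <= m%:R * s * (1 - p) by rewrite mulr_ge0 // ?mulr_ge0 // subr_ge0.
have h3 : 0 <= s * (1 - p) by rewrite mulr_ge0 // subr_ge0.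
have -> : (1 - s) * (m%:R * (1 - p) - (Gm - 1 - (m%:R - 1) * p)) +
    (1 - p) * (Gr - 1 - (r%:R - 1) * s) =
    (1 - s) * (m%:R * (1 - p) - (Gm - 1 - (m%:R - 1) * p)) +
    (1 - p) * (Gr - 1) - (1 - p) * (r%:R - 1) * s by ring.
rewrite e2.
have -> : Gm * (1 - s - (1 - b)) = Gm * b - Gm * s by ring.
rewrite e3.
have -> : m%:R * (1 - p * s) = (1 - s) * (m%:R * (1 - p) - (Gm - 1 - (m%:R - 1) * p)) +
    (Gm - (1 - p) - Gm * s) - (1 - p) * (r%:R - 1) * s
    + (m%:R * s * (1 - p) + s * (1 - p) + (1 - p) * (r%:R - 1) * s) by ring.
lra.
Qed.

Theorem proposition5 (R : realFieldType) (beta : R) (n t : nat)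
  (hb0 : 0 < beta) (hb1 : beta < 1) (ht1 : (1 <= t)%N) (htn : (t <= n)%N) :
  lambda beta n t <= (n - t + 1)%:R * beta ^+ (n - t + 1) / (1 - beta ^+ n).
Proof.
have D0 : 0 < 1 - beta ^+ n.
  rewrite subr_gt0 exprn_ilt1 ?ltW //; lia.
case: (ltnP 1 t) => [t2 | t1]; last first.
  have -> : t = 1%N by lia.
  rewrite /lambda big1 => [|i _]; last by rewrite big_geq.
  by apply: divr_ge0; [apply: mulr_ge0 => //; apply: exprn_ge0; apply: ltW | apply: ltW].
set m := (n - t + 1)%N; set r := (t - 1)%N.
set c := (1 - beta) / (1 - beta ^+ n).
have Hm : (n.+1 - t = m)%N by rewrite /m; lia.
have E : lambda beta n t = c ^+ 2 *
  \sum_(a < m) \sum_(k < r) (beta ^+ a * beta ^+ (m + k) * (m%:R + k%:R - a%:R)).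
  rewrite /lambda (@sum_rev _ _ _ _ _ (leqW htn) Hm) mulr_sumr; apply: eq_bigr => a _.
  have am := ltn_ord a.
  rewrite (@sum_rev _ _ _ _ _ ht1 (erefl r)) mulr_sumr; apply: eq_bigr => k _.
  have kr := ltn_ord k.
  rewrite /q (_ : (n - (n.+1.-1 - a) = a)%N); last by rewrite /m in am *; lia.
  rewrite (_ : (n - (t.-1 - k) = m + k)%N); last by rewrite /m /r in am kr *; lia.
  have : ((n.+1.-1 - a) + a = m + k + (t.-1 - k))%N by rewrite /m /r in am kr *; lia.
  move/(congr1 (fun x => x%:R : R)); rewrite !natrD => h.
  have -> : (n.+1.-1 - a)%:R - (t.-1 - k)%:R = m%:R + k%:R - a%:R :> R.
    by move: h; rewrite /m natrD; lra.
  rewrite /c /m !natrD; ring.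
rewrite E (S_id _ beta m r).
have r1 : (1 <= r)%N by rewrite /r; lia.
have K := key _ beta m r hb0 hb1 r1.
have Hn : beta ^+ n = beta ^+ m * beta ^+ r by rewrite -exprD /m /r; congr (_ ^+ _); lia.
rewrite -Hn in K.
move: K.
set S := (X in (1 - beta) ^+ 2 * X <= _) => K.
rewrite -subr_le0.
have D1 : 1 - beta ^+ n != 0 by rewrite gt_eqF.
have -> : c ^+ 2 * (beta ^+ m * S) - m%:R * beta ^+ m / (1 - beta ^+ n) =
   beta ^+ m * ((1 - beta) ^+ 2 * S - m%:R * (1 - beta ^+ n)) / (1 - beta ^+ n) ^+ 2.
  by rewrite /c; field.
apply: mulr_le0_ge0; last by rewrite invr_ge0 exprn_ge0 // ltW.
apply: mulr_ge0_le0; first by rewrite exprn_ge0 // ltW.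
by rewrite subr_le0.
Qed.
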